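(* Let $T$ be a reduced linear trellis of length $n$ over $\mathbb{F}$, let $\{\mathfrak{s}_i\}_{i\in\mathcal{I}}$ be a family of spans, and let $\mathfrak{s}$ be a span such that $\mathfrak{s}\not\le\mathfrak{s}_i$ for every $i\in\mathcal{I}$. Then $$\mathbb{S}_{\mathfrak{s}}(T)\cap\sum_{i\in\mathcal{I}}\mathbb{S}_{\mathfrak{s}_i}(T)\ \subseteq\ \mathbb{S}_{<\mathfrak{s}}(T).$$
   Context: Let $\mathbb{F}$ be a finite field with $q$ elements and $n\ge1$; indices are taken in $\mathbb{Z}_n$. A trellis $T$ of length $n$ over $\mathbb{F}$ consists of pairwise disjoint finite vertex sets $V_i(T)$, $i\in\mathbb{Z}_n$, and edge sets $E_i(T)\subseteq V_i(T)\times\mathbb{F}\times V_{i+1}(T)$; $(v,\alpha,w)\in E_i(T)$ is an edge from $v$ to $w$ with label $\alpha$ at time index $i$. Every trellis is assumed trim: each vertex has at least one outgoing and one incoming edge. $T$ is linear if every $V_i(T)$ is an $\mathbb{F}$-vector space and every $E_i(T)$ is a subspace of $V_i(T)\times\mathbb{F}\times V_{i+1}(T)$. A path of length $m$ is a sequence $v_0\alpha_0v_1\alpha_1\cdots\alpha_{m-1}v_m$ such that each $(v_j,\alpha_j,v_{j+1})$ is an edge. A cycle is a path of length $n$ starting in $V_0(T)$ with $v_n=v_0$; it is identified with $(\mathbf{v},\boldsymbol{\alpha})\in\prod_{i\in\mathbb{Z}_n}V_i(T)\times\mathbb{F}^n$. The label code $\mathbb{S}(T)$ is the set of cycles (a linear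 subspace if $T$ is linear); $L(\mathbf{v},\boldsymbol{\alpha}):=\boldsymbol{\alpha}$; $C(T):=L(\mathbb{S}(T))$. $T$ is reduced if every edge lies on some cycle. Spans. For $a\in\mathbb{Z}_n$ and $0\le l\le n-1$ put $[a,a+l]=\{a,a+1,\dots,a+l\}\subseteq\mathbb{Z}_n$ and $(a,a+l]=[a,a+l]\setminus\{a\}$. Such a pair $(a,l)$ is a span of length $l$; there are also two degenerate spans, $\emptyset$ (length $-1$, also written $(a,-1)$) and $\mathbb{Z}_n$ (length $n$, also written $(a,n)$). Partial order: $(a_1,l_1)\le(a_2,l_2)$ iff ($l_1\le l_2<n-1$ and $[a_1,a_1+l_1]\subseteq[a_2,a_2+l_2]$) or ($l_2=n-1$ and $(a_1,a_1+l_1]\subseteq(a_2,a_2+l_2]$) or $l_1=-1$ or $l_2=n$. For a linear trellis $T$, a nondegenerate span $(a,l)$ is a span of the cycle $(\mathbf{v},\boldsymbol{\alpha})$ if $\{i:v_i\neq0\}\subseteq(a,a+l]$ and $\{i:\alpha_i\ne0\}\subseteq[a,a+l]$; $\emptyset$ is a span only of the zero cycle and $\mathbb{Z}_n$ is a span of every cycle. The span subcode $\mathbb{S}_{\mathfrak{s}}(T)$ is the subspace of cycles having span $\mathfrak{s}$, and $\mathbb{S}_{<\mathfrak{s}}(T):=\sum_{\mathfrak{s}'\lneq\mathfrak{s}}\mathbb{S}_{\mathfrak{s}'}(T)$. *)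

(* Defs.v *)
From HB Require Import structures.
From mathcomp Require Import all_boot all_order all_algebra.
Set Implicit Arguments. Unset Strict Implicit. Unset Printing Implicit Defensive.
Import GRing.Theory.
Local Open Scope ring_scope.

Section Trellis.
Variables (F : finFieldType) (n : nat).

(* A linear trellis of length n over F: time indices are 'I_n (= Z_n, with
   successor ordS), vertex space at time i is 'rV[F]_(dim i) (a finite
   F-vector space; any finite F-vector space is isomorphic to one), edge set
   at time i is a subset of V_i x F x V_{i+1}. *)
Record trellis := Trellis {
  tdim : 'I_n -> nat;
  tedge : forall i : 'I_n, {set ('rV[F]_(tdim i) * F * 'rV[F]_(tdim (ordS i)))%type}
}.

Variable T : trellis.

Definition edge_of (i : 'I_n) (v : 'rV[F]_(tdim T i)) (a : F)
  (w : 'rV[F]_(tdim T (ordS i))) : bool := (v, a, w) \in tedge T i.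
Arguments edge_of : clear implicits.

Definition linear_trellis : Prop :=
  forall i : 'I_n,
    edge_of i 0 0 0 /\
    (forall v a w v' a' w', edge_of i v a w -> edge_of i v' a' w' ->
       edge_of i (v + v') (a + a') (w + w')) /\
    (forall (c : F) v a w, edge_of i v a w -> edge_of i (c *: v) (c * a) (c *: w)).

Definition trim : Prop :=
  (forall (i : 'I_n) (v : 'rV[F]_(tdim T i)), exists a w, edge_of i v a w) /\
  (forall (i : 'I_n) (w : 'rV[F]_(tdim T (ordS i))), exists v a, edge_of i v a w).

Record cyc := Cyc { cv : forall i : 'I_n, 'rV[F]_(tdim T i); ca : 'I_n -> F }.

Definition is_cycle (c : cyc) : Prop :=
  forall i : 'I_n, edge_of i (cv c i) (ca c i) (cv c (ordS i)).

Definition reduced : Prop :=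
  forall (i : 'I_n) v a w, edge_of i v a w ->
    exists c, is_cycle c /\ cv c i = v /\ ca c i = a /\ cv c (ordS i) = w.

Definition cyc0 : cyc := Cyc (fun i => 0) (fun _ => 0).
Definition cyc_add (c1 c2 : cyc) : cyc :=
  Cyc (fun i => cv c1 i + cv c2 i) (fun i => ca c1 i + ca c2 i).

Inductive in_sum (J : Type) (fam : J -> cyc -> Prop) : cyc -> Prop :=
  | in_sum0 : in_sum fam cyc0
  | in_sumD (j : J) (c d : cyc) : fam j c -> in_sum fam d -> in_sum fam (cyc_add c d).

End Trellis.

(* Spans of length n: the empty span (length -1), the full span Z_n
   (length n), and nondegenerate spans (a, l) with a : Z_n, 0 <= l <= n-1. *)
Inductive tspan (n : nat) :=
  | SEmpty
  | SFull
  | SInt of 'I_n & 'I_n.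
Arguments SEmpty {n}.
Arguments SFull {n}.

Definition offs (n : nat) (a i : 'I_n) : nat := ((i + n - a) %% n)%N.
Definition inC (n : nat) (a l i : 'I_n) : bool := (offs a i <= l)%N.
Definition inO (n : nat) (a l i : 'I_n) : bool := (0 < offs a i <= l)%N.

Definition span_le (n : nat) (s1 s2 : tspan n) : bool :=
  match s1, s2 with
  | SEmpty, _ => true
  | _, SFull => true
  | SFull, _ => false
  | SInt _ _, SEmpty => false
  | SInt a1 l1, SInt a2 l2 =>
      [&& (l1 <= l2)%N, (l2 < n.-1)%N & [forall i, inC a1 l1 i ==> inC a2 l2 i]]
      || ((l2 == n.-1 :> nat) && [forall i, inO a1 l1 i ==> inO a2 l2 i])
  end.

Definition span_lt (n : nat) (s1 s2 : tspan n) : Prop := span_le s1 s2 /\ s1 <> s2.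

Definition has_span (F : finFieldType) (n : nat) (T : trellis F n)
  (s : tspan n) (c : cyc T) : Prop :=
  match s with
  | SEmpty => (forall i, cv c i = 0) /\ (forall i, ca c i = 0)
  | SFull => True
  | SInt a l => (forall i, cv c i != 0 -> inO a l i) /\ (forall i, ca c i != 0 -> inC a l i)
  end.

Definition Sspan (F : finFieldType) (n : nat) (T : trellis F n) (s : tspan n)
  (c : cyc T) : Prop := is_cycle c /\ has_span s c.

Arguments Sspan {F n} T s c.

Definition Sless (F : finFieldType) (n : nat) (T : trellis F n) (s : tspan n)
  (c : cyc T) : Prop :=
  in_sum (fun s' : {s' : tspan n | span_lt s' s} => Sspan T (proj1_sig s')) c.
Arguments Sless {F n} T s c.

(* Main.v *)
Require Import Defs.
From mathcomp Require Import all_boot all_order all_algebra zify.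
From Stdlib Require Import FunctionalExtensionality.
Set Implicit Arguments. Unset Strict Implicit. Unset Printing Implicit Defensive.

Ltac arith := repeat (case: ifP => ?); lia.

Lemma mod2 (n x : nat) : x < n + n -> x %% n = if x < n then x else x - n.
Proof.
case: ifP => h; first by rewrite modn_small.
move=> h2; have -> : x = (x - n) + n by lia.
rewrite modnDr modn_small; lia.
Qed.

Lemma offsE n (a i : 'I_n) : offs a i = if a <= i then i - a else i + n - a.
Proof.
have := ltn_ord a; have := ltn_ord i => ??.
rewrite /offs mod2; arith.
Qed.

Lemma ordSE n (i : 'I_n) : (ordS i : nat) = if i.+1 < n then i.+1 else 0.
Proof.
have := ltn_ord i => ?; rewrite /= mod2; arith.
Qed.

Lemma offs_lt n (a i : 'I_n) : offs a i < n.
Proof. have := ltn_ord a; have := ltn_ord i => ??; rewrite offsE; arith. Qed.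

Lemma offs_inj n (a i j : 'I_n) : offs a i = offs a j -> i = j.
Proof.
have := ltn_ord a; have := ltn_ord i; have := ltn_ord j => ???.
rewrite !offsE => h; apply: val_inj => /=; move: h; arith.
Qed.

Lemma offs_aa n (a : 'I_n) : offs a a = 0.
Proof. rewrite offsE leqnn; lia. Qed.

Lemma offs_S n (a i : 'I_n) : offs a (ordS i) = if (offs a i).+1 < n then (offs a i).+1 else 0.
Proof.
have := ltn_ord a; have := ltn_ord i => ??.
rewrite !offsE ordSE; case: (leqP a i) => ?; case: ltnP => ?; arith.
Qed.

Lemma offs_Sa n (a i : 'I_n) : offs (ordS a) i = if offs a i == 0 then n.-1 else (offs a i).-1.
Proof.
have := ltn_ord a; have := ltn_ord i => ??.
rewrite !offsE ordSE; case: (leqP a i) => ?; case: (ltnP a.+1 n) => ?; rewrite ?leq0n; repeat (case: ifP => ?); lia.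
Qed.

Lemma offs_trans n (a b j : 'I_n) : offs b j = (offs b a + offs a j) %% n.
Proof.
have := ltn_ord a; have := ltn_ord b; have := ltn_ord j => ???.
rewrite !offsE; case: (leqP b a) => ?; case: (leqP a j) => ?; case: (leqP b j) => ?; rewrite mod2; arith.
Qed.

Lemma offs_surj n (a : 'I_n) k : k < n -> exists j : 'I_n, offs a j = k.
Proof.
move=> hk; have := ltn_ord a => ?.
case: (ltnP (a + k) n) => h.
  by exists (Ordinal h); rewrite offsE /=; arith.
have hl : a + k - n < n by lia.
by exists (Ordinal hl); rewrite offsE /=; arith.
Qed.

Import GRing.Theory.
Local Open Scope ring_scope.

Lemma span_le_of n (a1 a2 l1 l2 : 'I_n) : (l1 <= l2)%N ->
  (forall i, inC a1 l1 i -> inC a2 l2 i) -> (forall i, inO a1 l1 i -> inO a2 l2 i) ->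
  span_le (SInt a1 l1) (SInt a2 l2).
Proof.
move=> h12 hC hO /=; have := ltn_ord l2 => hl2.
case: (ltnP l2 n.-1) => h.
  by apply/orP; left; apply/and3P; split => //; apply/forallP => i; apply/implyP; apply: hC.
apply/orP; right; apply/andP; split; first by apply/eqP; lia.
by apply/forallP => i; apply/implyP; apply: hO.
Qed.

Section Main.
Variables (F : finFieldType) (n : nat) (T : trellis F n).
Hypothesis HL : linear_trellis T.
Variables (a : 'I_n) (l : nat).
Hypothesis hl1 : (1 <= l)%N.
Hypothesis hln : (l < n)%N.

Lemma e0 (t : 'I_n) : edge_of (T:=T) (i:=t) 0 0 0.
Proof. by case: (HL t). Qed.

Lemma eD (t : 'I_n) v x w v' x' w' : edge_of (T:=T) (i:=t) v x w -> edge_of (i:=t) v' x' w' ->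
  edge_of (i:=t) (v + v') (x + x') (w + w').
Proof. by case: (HL t) => _ [h _]; apply: h. Qed.

Definition good (d : cyc T) := is_cycle d /\ exists tau, (1 <= offs a tau <= l)%N /\ cv d tau = 0.

Definition Inv (c : cyc T) : Prop := exists P Q : cyc T,
 [/\ (forall t, cv P t + cv Q t = cv c t /\ ca P t + ca Q t = ca c t),
  (forall t, (offs a t < n.-1)%N -> edge_of (i:=t) (cv P t) (ca P t) (cv P (ordS t))
          /\ edge_of (i:=t) (cv Q t) (ca Q t) (cv Q (ordS t))),
  (forall t, offs a t = n.-1 -> edge_of (i:=t) (cv P t) (ca P t) (cv c (ordS t))
          /\ edge_of (i:=t) (cv Q t) (ca Q t) 0),
  (forall t, ((offs a t <= 1)%N -> cv P t = 0) /\ (offs a t = 0%N -> ca P t = 0)) &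
  (forall t, (l <= offs a t)%N -> cv Q t = 0 /\ ca Q t = 0)].

Lemma Inv0 : Inv (cyc0 T).
Proof.
exists (cyc0 T), (cyc0 T); split => //= t; rewrite ?addr0; split => //; exact: e0.
Qed.

Lemma InvD c1 c2 : Inv c1 -> Inv c2 -> Inv (cyc_add c1 c2).
Proof.
move=> [P1 [Q1 [h1 h2 h3 h4 h6]]] [P2 [Q2 [k1 k2 k3 k4 k6]]].
exists (cyc_add P1 P2), (cyc_add Q1 Q2); split => t /=.
- case: (h1 t) (k1 t) => [<- <-] [<- <-]; split; by rewrite addrACA.
- move=> ht; case: (h2 t ht) (k2 t ht) => ? ? [? ?]; split; exact: eD.
- move=> ht; case: (h3 t ht) (k3 t ht) => ? E1 [? E2]; split; first exact: eD.
  by have := eD E1 E2; rewrite addr0.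
- case: (h4 t) (k4 t) => A1 A2 [B1 B2]; split => ht.
    by rewrite A1 // B1 // addr0.
  by rewrite A2 // B2 // addr0.
- by move=> ht; case: (h6 t ht) (k6 t ht) => -> -> [-> ->]; rewrite !addr0.
Qed.

Lemma offsS_lt (t : 'I_n) : (offs a t < n.-1)%N -> offs a (ordS t) = (offs a t).+1.
Proof. move=> h; rewrite offs_S; case: ifP => //; lia. Qed.

Lemma offsS_eq (t : 'I_n) : offs a t = n.-1 -> offs a (ordS t) = 0%N.
Proof. move=> h; rewrite offs_S h; case: ifP => //; lia. Qed.

Lemma Inv_good d : good d -> Inv d.
Proof.
move=> [cyd [tau [/andP[ht1 ht2] dt]]].
set o := offs a tau.
exists (Cyc (fun t => if (o <= offs a t)%N then cv d t else 0) (fun t => if (o <= offs a t)%N then ca d t else 0)),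
       (Cyc (fun t => if (offs a t < o)%N then cv d t else 0) (fun t => if (offs a t < o)%N then ca d t else 0)).
have hoff := offs_lt a.
split => t /=.
- by case: leqP => _; rewrite ?add0r ?addr0.
- move=> ht; rewrite offsS_lt //.
  have dS : o = (offs a t).+1 -> cv d (ordS t) = 0.
    by move=> ho; rewrite (@offs_inj _ a (ordS t) tau) // offsS_lt.
  have cy := cyd t.
  case: (leqP o (offs a t)) => h1; case: (leqP o (offs a t).+1) => h2 //; split; try exact: e0; try lia.
  + by rewrite dS //; [exact: e0 | lia].
  + by rewrite -(dS _) //; lia.
- move=> ht; have cy := cyd t.
  case: (leqP o (offs a t)) => h1; last lia.
  by split => //; exact: e0.
- split => ht.
    case: leqP => // h; rewrite (@offs_inj _ a t tau) //; lia.
  case: leqP => // h; lia.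
- move=> ht; case: ltnP => h; first lia; done.
Qed.

Variable L : 'I_n.
Hypothesis eL : nat_of_ord L = l.

Lemma good_of s' d : ~~ span_le (SInt a L) s' -> Sspan T s' d -> good d.
Proof.
move=> H [cyd hs]; split => //.
have hoff := offs_lt.
case: s' H hs => [_ [hv _] | // | a' l' H [hv _]].
  have [j hj] : exists j : 'I_n, offs a j = 1%N by apply: offs_surj; move: hl1 hln; clear; lia.
  by exists j; rewrite hj hv; split.
have hvz : forall t, ~~ inO a' l' t -> cv d t = 0.
  by move=> t ht; apply/eqP; apply: contraR ht; apply: hv.
have hl'n := ltn_ord l'.
case: (ltnP l' n.-1) => hl'; last first.
  move: H => /= /norP [_].
  rewrite (_ : (l' == n.-1 :> nat) = true) /=; last by apply/eqP; lia.
  case/forallPn => j; rewrite negb_imply /inO => /andP [hj1 hj2].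
  exists j; split; first lia.
  by apply: hvz; rewrite /inO.
suff [j [hj1 hj2]] : exists j : 'I_n, (offs a j <= l)%N /\ (l' < offs a' j)%N.
  have z1 : cv d j = 0 by apply: hvz; rewrite /inO; lia.
  have z2 : cv d (ordS j) = 0.
    apply: hvz; rewrite /inO offs_S; have := hoff _ a' j; case: ifP => _; lia.
  case: (posnP (offs a j)) => hj0.
    exists (ordS j); rewrite z2 offs_S hj0; split => //; case: ifP => //; lia.
  by exists j; rewrite z1; split => //; lia.
move: H => /= /norP [H1 H2].
case: (leqP L l') => hLl.
  rewrite hLl hl' /= in H1.
  case/forallPn: H1 => j; rewrite negb_imply /inC => /andP [hj1 hj2].
  by exists j; split; lia.
case: (ltnP l' (offs a' a)) => hx.
  by exists a; rewrite offs_aa; split.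
have [j hj] : exists j : 'I_n, offs a j = (l' - offs a' a).+1 by apply: offs_surj; lia.
exists j; rewrite (offs_trans a a' j) hj modn_small; lia.
Qed.

Lemma Inv_sum (J : Type) (fam : J -> cyc T -> Prop) c :
  (forall j d, fam j d -> good d) -> in_sum fam c -> Inv c.
Proof.
move=> hg; elim => [|j d c' hd _ IH]; first exact: Inv0.
by apply: InvD => //; apply: Inv_good; apply: hg hd.
Qed.

Lemma cyc_ext (c d : cyc T) : (forall t, cv c t = cv d t) -> (forall t, ca c t = ca d t) -> c = d.
Proof.
case: c => v1 a1; case: d => v2 a2 /= h1 h2; f_equal.
  exact: functional_extensionality_dep.
exact: functional_extensionality.
Qed.



Lemma finish c : Sspan T (SInt a L) c -> Inv c -> Sless T (SInt a L) c.
Proof.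
move=> [cyc [hv ha]] [P [Q [h1 h2 h3 h4 h6]]].
have hoff := offs_lt a.
have cvz : forall t, (offs a t == 0%N) || (l < offs a t)%N -> cv c t = 0.
  move=> t ht; apply/eqP; move: ht; apply: contraLR => /hv; rewrite /inO; lia.
have caz : forall t, (l < offs a t)%N -> ca c t = 0.
  move=> t ht; apply/eqP; move: ht; apply: contraLR => /ha; rewrite /inC; lia.
have Pz : forall t, (offs a t <= 1)%N -> cv P t = 0 by move=> t; case: (h4 t).
have Pz2 : forall t, (l < offs a t)%N -> cv P t = 0 /\ ca P t = 0.
  move=> t ht; case: (h1 t) (h6 t (ltnW ht)) => e1 e2 [q1 q2].
  by rewrite -(addr0 (cv P t)) -(addr0 (ca P t)) -q1 -q2 e1 e2 cvz ?caz //; apply/orP; right.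
have Qz0 : forall t, offs a t = 0%N -> cv Q t = 0.
  move=> t ht; case: (h1 t) => e1 _.
  move: e1; rewrite Pz ?ht // add0r => ->; apply: cvz; by rewrite ht.
have isP : is_cycle P.
  move=> t; case: (ltnP (offs a t) n.-1) => h; first by case: (h2 t h).
  have ht : offs a t = n.-1 by have := hoff t; lia.
  have o0 := offsS_eq ht.
  case: (h3 t ht) => E _; rewrite (Pz (ordS t)) ?o0 //; have Z : cv c (ordS t) = 0 by apply: cvz; rewrite o0.
  by rewrite Z in E.
have isQ : is_cycle Q.
  move=> t; case: (ltnP (offs a t) n.-1) => h; first by case: (h2 t h).
  have ht : offs a t = n.-1 by have := hoff t; lia.
  have o0 := offsS_eq ht.
  by case: (h3 t ht) => _ E; rewrite (Qz0 (ordS t)).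
have hL1 : (l.-1 < n)%N by lia.
set L1 := Ordinal hL1.
have ltP : span_lt (SInt (ordS a) L1) (SInt a L).
  split; last by case=> _ /(congr1 val) /=; lia.
  apply: span_le_of => [/=|i|i]; rewrite /inC /inO ?offs_Sa /=; try case: eqP; lia.
have ltQ : span_lt (SInt a L1) (SInt a L).
  split; last by case=> /(congr1 val) /=; lia.
  apply: span_le_of => [/=|i|i]; rewrite /inC /inO /=; lia.
have sP : Sspan T (SInt (ordS a) L1) P.
  split => //; split => t; rewrite /inO /inC offs_Sa /= => hnz.
    have h0 : (1 < offs a t)%N by apply: contraR hnz; rewrite -leqNgt => /Pz ->; rewrite eqxx.
    have h1' : (offs a t <= l)%N by apply: contraR hnz; rewrite -ltnNge => /Pz2 [-> _]; rewrite eqxx.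
    case: eqP; lia.
  have h0 : (0 < offs a t)%N by apply: contraR hnz; rewrite -eqn0Ngt => /eqP /(proj2 (h4 t)) ->; rewrite eqxx.
  have h1' : (offs a t <= l)%N by apply: contraR hnz; rewrite -ltnNge => /Pz2 [_ ->]; rewrite eqxx.
  case: eqP; lia.
have sQ : Sspan T (SInt a L1) Q.
  split => //; split => t; rewrite /inO /inC /= => hnz.
    have h0 : (0 < offs a t)%N by apply: contraR hnz; rewrite -eqn0Ngt => /eqP /Qz0 ->; rewrite eqxx.
    have h1' : (offs a t < l)%N by apply: contraR hnz; rewrite -leqNgt => /h6 [-> _]; rewrite eqxx.
    lia.
  have h1' : (offs a t < l)%N by apply: contraR hnz; rewrite -leqNgt => /h6 [_ ->]; rewrite eqxx.
  lia.
have -> : c = cyc_add P (cyc_add Q (cyc0 T)).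
  apply: cyc_ext => t /=; rewrite addr0; by case: (h1 t).
rewrite /Sless.
apply: (in_sumD (j := exist (fun s' => span_lt s' (SInt a L)) _ ltP) sP).
apply: (in_sumD (j := exist (fun s' => span_lt s' (SInt a L)) _ ltQ) sQ).
exact: in_sum0.
Qed.
End Main.

Theorem mainTheorem1 (F : finFieldType) (n : nat) (T : trellis F n)
  (I : Type) (s_ : I -> tspan n) (s : tspan n) :
  (0 < n)%N -> linear_trellis T -> trim T -> reduced T ->
  (forall i : I, ~~ span_le s (s_ i)) ->
  forall c : cyc T,
    Sspan T s c -> in_sum (fun i : I => Sspan T (s_ i)) c -> Sless T s c.
Proof.
move=> n0 HL _ _ hs c hc hsum.
case: s hs hc => [hs hc | hs hc | a L hs hc].
- move: hsum; elim => [|j d c' _ _ _]; first exact: in_sum0.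
  by have := hs j.
- elim: hsum => [|j d c' hd _ IH]; first exact: in_sum0.
  have pf : span_lt (s_ j) SFull.
    split; first by case: (s_ j).
    by move=> e; have := hs j; rewrite e.
  exact: (in_sumD (j := exist (fun s' => span_lt s' SFull) _ pf) hd IH).
case: (posnP L) => hL0.
  have caa : ca c a = 0.
    elim: hsum => [|j d c' hd _ IH] //=; rewrite IH addr0.
    move: (hs j) hd; case: (s_ j) => [_ [_ [_ ->]] // | // | a' l' H [_ [_ ha]]].
    have hl'n := ltn_ord l'.
    case: (ltnP l' n.-1) => hl'; last first.
      exfalso; move: H => /negP; apply; apply: span_le_of => [|i|i]; rewrite /inC /inO; try have := offs_lt a' i; lia.
    move: H => /= /norP [H1 _].
    rewrite hL0 hl' /= in H1.
    case/forallPn: H1 => i; rewrite negb_imply /inC => /andP [hi1 hi2].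
    have ei : i = a by apply: (@offs_inj _ a); rewrite offs_aa; lia.
    rewrite ei in hi2; apply/eqP; apply/negPn/negP => /ha; by rewrite /inC (negbTE hi2).
  have -> : c = cyc0 T.
    case: hc => _ [hv ha]; apply: cyc_ext => t /=.
      apply/eqP; apply/negPn/negP => /hv; rewrite /inO; lia.
    case: (eqVneq t a) => [-> // | hta].
    apply/eqP; apply/negPn/negP => /ha; rewrite /inC => h.
    have : t = a by apply: (@offs_inj _ a); rewrite offs_aa; lia.
    by move/eqP; rewrite (negbTE hta).
  exact: in_sum0.
have hln : (L < n)%N := ltn_ord L.
apply: (finish hL0 hln erefl hc).
apply: (Inv_sum HL hL0 hln _ hsum) => j d hd.
exact: (good_of hL0 hln erefl (hs j) hd).
Qed.
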